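(* The standard unit sphere $S^n$ is $\Phi$-SSU if and only if $n>4$.
   Context: A Riemannian $n$-manifold $N$ is $\Phi$-SSU if there is an isometric immersion $N\to\mathbb R^q$ with second fundamental form $\mathsf B$ such that for every $y\in N$ and every unit $\mathsf x\in T_yN$, $\sum_{\beta=1}^n\big(4|\mathsf B(\mathsf x,\mathsf e_\beta)|^2-\langle \mathsf B(\mathsf x,\mathsf x),\mathsf B(\mathsf e_\beta,\mathsf e_\beta)\rangle\big)<0$, where $\{\mathsf e_\beta\}$ is an orthonormal basis of $T_yN$. *)

(* Defs.v *)
From HB Require Import structures.
From mathcomp Require Import all_boot all_order all_algebra.
From mathcomp Require Import all_classical all_reals all_analysis.
Set Implicit Arguments. Unset Strict Implicit. Unset Printing Implicit Defensive.
Import Order.TTheory GRing.Theory Num.Theory.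
Import numFieldNormedType.Exports.
Local Open Scope ring_scope.

Section Defs.
Variable R : realType.

(* Euclidean inner product on row vectors (NOT the library's max norm). *)
Definition dotr (m : nat) (u v : 'rV[R]_m) : R := (u *m v^T) 0 0.

Fixpoint iterD (m q : nat) (f : 'rV[R]_m -> 'rV[R]_q) (us : seq 'rV[R]_m)
  : 'rV[R]_m -> 'rV[R]_q :=
  match us with
  | [::] => f
  | u :: us' => fun x => 'D_u (iterD f us') x
  end.

Definition smooth_map (m q : nat) (f : 'rV[R]_m -> 'rV[R]_q) : Prop :=
  forall (us : seq 'rV[R]_m) (x : 'rV[R]_m), differentiable (iterD f us) x.

Definition on_sphere (n : nat) (y : 'rV[R]_n.+1) : Prop := dotr y y = 1.
Definition tangent (n : nat) (y u : 'rV[R]_n.+1) : Prop := dotr u y = 0.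

(* An isometric immersion S^n -> R^q, given by (the restriction to S^n of)
   a smooth map on R^(n+1); its differential preserves the round metric. *)
Definition isometric_immersion_sphere (n q : nat)
  (f : 'rV[R]_n.+1 -> 'rV[R]_q) : Prop :=
  smooth_map f /\
  forall y u v : 'rV[R]_n.+1, on_sphere y -> tangent y u -> tangent y v ->
    dotr ('D_u f y) ('D_v f y) = dotr u v.

(* Second fundamental form at y in S^n:  B(u,v) = D_u(df(V)) - df(nabla_u V)
   = D^2 f(y)(u,v) - <u,v> Df(y) y   (Gauss formula; nabla = Levi-Civita
   connection of the round sphere). *)
Definition sff (n q : nat) (f : 'rV[R]_n.+1 -> 'rV[R]_q)
  (y u v : 'rV[R]_n.+1) : 'rV[R]_q :=
  'D_u ('D_v f) y - dotr u v *: 'D_y f y.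

Definition PhiSSU_sphere (n : nat) : Prop :=
  exists (q : nat) (f : 'rV[R]_n.+1 -> 'rV[R]_q),
    isometric_immersion_sphere f /\
    forall (y x : 'rV[R]_n.+1) (e : 'I_n -> 'rV[R]_n.+1),
      on_sphere y -> tangent y x -> dotr x x = 1 ->
      (forall i, tangent y (e i)) ->
      (forall i j, dotr (e i) (e j) = (i == j)%:R) ->
      \sum_(b < n) (4 * dotr (sff f y x (e b)) (sff f y x (e b))
                    - dotr (sff f y x x) (sff f y (e b) (e b))) < 0.
End Defs.

(* Main.v *)
Require Import Defs.
From HB Require Import structures.
From mathcomp Require Import all_boot all_order all_algebra.
From mathcomp Require Import all_classical all_reals all_analysis.
From mathcomp Require Import ring lra.
Set Implicit Arguments. Unset Strict Implicit. Unset Printing Implicit Defensive.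
Import Order.TTheory GRing.Theory Num.Theory.
Import numFieldNormedType.Exports.
Local Open Scope ring_scope.

Section S.
Variable R : realType.

Lemma dotrE m (u v : 'rV[R]_m) : dotr u v = \sum_k u 0 k * v 0 k.
Proof. by rewrite /dotr !mxE; apply: eq_bigr => k _; rewrite mxE. Qed.

Lemma dotrC m (u v : 'rV[R]_m) : dotr u v = dotr v u.
Proof. by rewrite !dotrE; apply: eq_bigr => k _; rewrite mulrC. Qed.

Lemma dotr_ge0 m (u : 'rV[R]_m) : 0 <= dotr u u.
Proof. by rewrite dotrE; apply: sumr_ge0 => k _; rewrite -expr2 sqr_ge0. Qed.

Lemma dotrDl m (u w v : 'rV[R]_m) : dotr (u + w) v = dotr u v + dotr w v.
Proof. by rewrite !dotrE -big_split; apply: eq_bigr => k _; rewrite mxE mulrDl. Qed.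

Lemma dotrNl m (u v : 'rV[R]_m) : dotr (- u) v = - dotr u v.
Proof. by rewrite !dotrE -sumrN; apply: eq_bigr => k _; rewrite mxE mulNr. Qed.

Lemma dotrZl m a (u v : 'rV[R]_m) : dotr (a *: u) v = a * dotr u v.
Proof. by rewrite !dotrE mulr_sumr; apply: eq_bigr => k _; rewrite mxE mulrA. Qed.

Lemma dotr_suml m p (w : 'I_p -> 'rV[R]_m) v :
  dotr (\sum_i w i) v = \sum_i dotr (w i) v.
Proof.
rewrite dotrE; under eq_bigr do rewrite summxE big_distrl /=.
by rewrite exchange_big; apply: eq_bigr => i _; rewrite dotrE.
Qed.

Lemma sqdiff n (x : 'I_n -> R) :
  \sum_a \sum_b (x a - x b) ^+ 2 =
     2 * n%:R * \sum_a x a ^+ 2 - 2 * (\sum_a x a) ^+ 2.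
Proof.
have e : forall a, \sum_b (x a - x b) ^+ 2 =
   x a ^+ 2 *+ n + \sum_b x b ^+ 2 - 2 * x a * \sum_b x b.
  move=> a; rewrite mulr_sumr.
  have -> : x a ^+ 2 *+ n = \sum_(b < n) x a ^+ 2 by rewrite sumr_const card_ord.
  rewrite -big_split -sumrB /=; apply: eq_bigr => b _; ring.
under eq_bigr do rewrite e.
rewrite sumrB big_split /= sumr_const card_ord -big_distrl /= sumrMnl -big_distrr /=.
have key : forall S T : R, S *+ n + S *+ n - 2 * T * T = 2 * n%:R * S - 2 * T ^+ 2.
  by move=> S T; ring.
exact: key.
Qed.


Lemma core (n : nat) (M : 'I_n -> 'I_n -> R) : (n <= 4)%N ->
  0 <= \sum_a \sum_b (4 * M a b ^+ 2 - M a a * M b b).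
Proof.
move=> hn.
have h1 : \sum_a M a a ^+ 2 <= \sum_a \sum_b M a b ^+ 2.
  apply: ler_sum => a _; rewrite (bigD1 a) //= lerDl.
  by apply: sumr_ge0 => b _; rewrite sqr_ge0.
have h2 : 2 * (\sum_a M a a) ^+ 2 <= 2 * n%:R * \sum_a M a a ^+ 2.
  have : 0 <= \sum_a \sum_b (M a a - M b b) ^+ 2.
    by apply: sumr_ge0 => a _; apply: sumr_ge0 => b _; rewrite sqr_ge0.
  by rewrite (sqdiff (fun a => M a a)) subr_ge0.
have h3 : (n%:R : R) <= 4 by rewrite (ler_nat R n 4).
have h4 : 0 <= \sum_a M a a ^+ 2 by apply: sumr_ge0 => a _; rewrite sqr_ge0.
have -> : \sum_a \sum_b (4 * M a b ^+ 2 - M a a * M b b) =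
   4 * \sum_a \sum_b M a b ^+ 2 - (\sum_a M a a) ^+ 2.
  rewrite expr2 big_distrl /= mulr_sumr -sumrB; apply: eq_bigr => a _.
  by rewrite mulr_sumr big_distrr -sumrB.
nra.
Qed.

Lemma dotrDr m (u w v : 'rV[R]_m) : dotr v (u + w) = dotr v u + dotr v w.
Proof. by rewrite !(dotrC v) dotrDl. Qed.
Lemma dotrNr m (u v : 'rV[R]_m) : dotr v (- u) = - dotr v u.
Proof. by rewrite !(dotrC v) dotrNl. Qed.
Lemma dotrZr m a (u v : 'rV[R]_m) : dotr v (a *: u) = a * dotr v u.
Proof. by rewrite !(dotrC v) dotrZl. Qed.

Lemma dotr_delta m (i j : 'I_m) :
  dotr (delta_mx 0 i) (delta_mx 0 j) = (i == j)%:R :> R.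
Proof.
rewrite /dotr trmx_delta mul_delta_mx_cond.
by case: (i == j); rewrite ?mulr1n ?mulr0n !mxE ?eqxx.
Qed.

Lemma total_ge0 n q (B : 'I_n -> 'I_n -> 'rV[R]_q) : (n <= 4)%N ->
  0 <= \sum_a \sum_b (4 * dotr (B a b) (B a b) - dotr (B a a) (B b b)).
Proof.
move=> hn.
have -> : \sum_a \sum_b (4 * dotr (B a b) (B a b) - dotr (B a a) (B b b)) =
  \sum_a \sum_b \sum_k (4 * (B a b 0 k) ^+ 2 - B a a 0 k * B b b 0 k).
  apply: eq_bigr => a _; apply: eq_bigr => b _.
  rewrite !dotrE mulr_sumr -sumrB; apply: eq_bigr => k _; by rewrite expr2.
under eq_bigr do rewrite exchange_big.
rewrite exchange_big /=; apply: sumr_ge0 => k _.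
exact: (core (fun a b => B a b 0 k)).
Qed.

Lemma bessel n m (x : 'rV[R]_m) (e : 'I_n -> 'rV[R]_m) :
  (forall i j, dotr (e i) (e j) = (i == j)%:R) ->
  \sum_b dotr x (e b) ^+ 2 <= dotr x x.
Proof.
move=> he.
set w := \sum_b dotr x (e b) *: e b.
have hw : forall j, dotr w (e j) = dotr x (e j).
  move=> j; rewrite dotr_suml (bigD1 j) //= big1 => [|b /negbTE hb].
    by rewrite dotrZl he eqxx mulr1 addr0.
  by rewrite dotrZl he hb mulr0.
have hww : dotr w w = \sum_b dotr x (e b) ^+ 2.
  rewrite {1}/w dotr_suml; apply: eq_bigr => b _.
  by rewrite dotrZl (dotrC (e b)) hw expr2.
have hwx : dotr w x = \sum_b dotr x (e b) ^+ 2.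
  rewrite {1}/w dotr_suml; apply: eq_bigr => b _.
  by rewrite dotrZl (dotrC (e b)) expr2.
have := dotr_ge0 (x - w).
rewrite dotrDl !dotrDr !dotrNl !dotrNr opprK hww (dotrC x w) hwx.
move=> h; lra.
Qed.

Lemma iter_id m (us : seq 'rV[R]_m) :
  Defs.iterD (id : 'rV[R]_m -> 'rV[R]_m) us = id \/ exists c, Defs.iterD (id : 'rV[R]_m -> 'rV[R]_m) us = cst c.
Proof.
elim: us => [|u us [IH|[c IH]]] /=; first by left.
- right; exists u; apply: funext => z; rewrite IH; exact: derive_id.
- right; exists 0; apply: funext => z; rewrite IH; exact: derive_cst.
Qed.

End S.

Theorem corollary5p2 (R : realType) (n : nat) :
  (0 < n)%N -> (PhiSSU_sphere R n <-> (4 < n)%N).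
Proof.
move=> n0; split.
- case=> q [f [_ H]].
  rewrite ltnNge; apply/negP => hn.
  set y : 'rV[R]_n.+1 := delta_mx 0 ord0.
  set e : 'I_n -> 'rV[R]_n.+1 := fun i => delta_mx 0 (lift ord0 i).
  have hy : on_sphere y by rewrite /on_sphere dotr_delta eqxx.
  have he : forall i j, dotr (e i) (e j) = (i == j)%:R.
    by move=> i j; rewrite dotr_delta (inj_eq (@lift_inj _ ord0)).
  have ht : forall i, tangent y (e i).
    by move=> i; rewrite /tangent dotr_delta eq_sym (negbTE (neq_lift _ _)).
  have hlt : forall a, \sum_(b < n) (4 * dotr (sff f y (e a) (e b)) (sff f y (e a) (e b))
                    - dotr (sff f y (e a) (e a)) (sff f y (e b) (e b))) < 0.
    by move=> a; apply: H => //; rewrite he eqxx.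
  have := total_ge0 (fun a b => sff f y (e a) (e b)) hn.
  rewrite (bigD1 (Ordinal n0)) //= => h.
  have h1 := hlt (Ordinal n0).
  have h2 : \sum_(i < n | i != Ordinal n0) \sum_(b < n) (4 * dotr (sff f y (e i) (e b)) (sff f y (e i) (e b))
                    - dotr (sff f y (e i) (e i)) (sff f y (e b) (e b))) <= 0.
    by apply: sumr_le0 => i _; apply: ltW; apply: hlt.
  lra.
- move=> hn; exists n.+1, id; split.
    split.
      move=> us x; case: (iter_id us) => [->|[c ->]] //.
    by move=> y u v _ _ _; rewrite !derive_id.
  have Did : forall v : 'rV[R]_n.+1, 'D_v (id : 'rV[R]_n.+1 -> 'rV[R]_n.+1) = cst v.
    by move=> v; apply: funext => z; exact: derive_id.
  have hs : forall y u v : 'rV[R]_n.+1, sff id y u v = - (dotr u v *: y).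
    by move=> y u v; rewrite /sff Did derive_cst derive_id sub0r.
  move=> y x e hy hx hxx he hee.
  under eq_bigr do rewrite !hs !dotrNl !dotrNr opprK !dotrZl !dotrZr hy hee eqxx hxx.
  rewrite sumrB sumr_const card_ord -mulr_sumr.
  have hb := bessel x hee; rewrite hxx in hb.
  have h5 : (5 : R) <= n%:R by rewrite (ler_nat R 5 n).
  under eq_bigr do rewrite mulr1 -expr2.
  rewrite opprK mulr1 mul1r mulr1n.
  lra.
Qed.
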